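(* Let $G=K_{r_1,\dots,r_k}$ with partition sets $X_1,\dots,X_k$, $|X_i|=r_i$. Suppose $H$ is a good bisection of $G$ with partition sets $V_1,V_2$. Then for each $i\in[k]$: (i) if $X_i$ crosses $H$ and $|\overline{X_i}|$ is even, then $|\overline{X_i}\cap V_1|=|\overline{X_i}\cap V_2|$ and $\big||X_i\cap V_1|-|X_i\cap V_2|\big|\le 1$; (ii) if $X_i$ crosses $H$ and $|\overline{X_i}|$ is odd, then $\big||\overline{X_i}\cap V_1|-|\overline{X_i}\cap V_2|\big|=1$ and $\big||X_i\cap V_1|-|X_i\cap V_2|\big|\le 2$.
   Context: A bisection of a graph $G$ is a bipartite spanning subgraph $H$ of $G$ with partition sets $V_1,V_2$ (every edge of $H$ joins $V_1$ and $V_2$) with $||V_1|-|V_2||\le 1$. It is good if $2d_H(v)\ge d_G(v)-1$ for every $v\in V(G)$. For $W\subseteq V(G)$, $\overline{W}=V(G)\setminus W$. A partition set $X_i$ crosses $H$ if $X_i\cap V_1\neq\emptyset$ and $X_i\cap V_2\ne\emptyset$. *)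

(* Defs.v *)
From mathcomp Require Import all_boot all_order all_algebra.
Set Implicit Arguments. Unset Strict Implicit. Unset Printing Implicit Defensive.

(* A simple graph on a finite vertex type T is given by its adjacency relation. *)

(* The complete multipartite graph whose partition sets are the fibres of
   [c : T -> 'I_k]: two vertices are adjacent iff they lie in different parts. *)
Definition cmp_graph (T : finType) (k : nat) (c : T -> 'I_k) : rel T :=
  fun x y => c x != c y.

Definition part (T : finType) (k : nat) (c : T -> 'I_k) (i : 'I_k) : {set T} :=
  [set x | c x == i].

Definition deg (T : finType) (e : rel T) (v : T) : nat := #|[set u | e v u]|.

(* H (adjacency h) is a bisection of G (adjacency g) with partition sets
   V1 and V2 = complement of V1: a spanning subgraph (same vertex set T) of G,
   which is a graph (symmetric), every edge of H joins V1 and V2,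
   and | |V1| - |V2| | <= 1. *)
Definition bisection (T : finType) (g h : rel T) (V1 : {set T}) : Prop :=
  [/\ symmetric h,
      (forall x y, h x y -> g x y),
      (forall x y, h x y -> (x \in V1) != (y \in V1)) &
      (`|#|V1|%:Z - #|~: V1|%:Z| <= 1)%R].

Definition good_bisection (T : finType) (g h : rel T) (V1 : {set T}) : Prop :=
  bisection g h V1 /\
  (forall v : T, ((deg g v)%:Z - 1 <= 2 * (deg h v)%:Z)%R).

Definition crosses (T : finType) (X V1 : {set T}) : Prop :=
  X :&: V1 != set0 /\ X :&: ~: V1 != set0.

(* Main.v *)
Require Import Defs.
From mathcomp Require Import all_boot all_order all_algebra.
From mathcomp Require Import zify.
Import Order.TTheory GRing.Theory Num.Theory.

Theorem lemma3p1 (k : nat) (r : 'I_k -> nat) (T : finType) (c : T -> 'I_k)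
  (Hsize : forall i : 'I_k, #|part c i| = r i)
  (h : rel T) (V1 : {set T})
  (Hgood : good_bisection (cmp_graph c) h V1) :
  forall i : 'I_k,
    let X := part c i in
    let V2 := ~: V1 in
    (crosses X V1 -> ~~ odd #|~: X| ->
       #|~: X :&: V1| = #|~: X :&: V2| /\
       (`|#|X :&: V1|%:Z - #|X :&: V2|%:Z| <= 1)%R) /\
    (crosses X V1 -> odd #|~: X| ->
       `|#|~: X :&: V1|%:Z - #|~: X :&: V2|%:Z|%R = 1%R /\
       (`|#|X :&: V1|%:Z - #|X :&: V2|%:Z| <= 2)%R).
Proof.
move=> i X V2.
case: Hgood => [[Hs Hg Hb Hbal] Hdeg].
have degg : forall v, v \in X -> deg (cmp_graph c) v = #|~: X|.
  move=> v; rewrite /X /part inE => /eqP cv; rewrite /deg; apply: eq_card => u.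
  by rewrite !inE /cmp_graph cv eq_sym.
have degh : forall v, v \in X -> deg h v <= #|~: X :&: (if v \in V1 then V2 else V1)|.
  move=> v vX; rewrite /deg; apply: subset_leq_card; apply/subsetP => u.
  rewrite inE => huv; have g1 := Hg _ _ huv; have b1 := Hb _ _ huv.
  move: vX g1 b1; rewrite /X /part /V2 /cmp_graph !inE => /eqP ->.
  move=> ne; case: (v \in V1); rewrite ?inE; case: (u \in V1) => //= _; by rewrite eq_sym ne.
set a := #|~: X :&: V1|; set b := #|~: X :&: V2|.
have ab : #|~: X| = a + b by rewrite /a /b /V2 -(cardsID V1 (~: X)) setDE.
have V1s : #|V1| = #|X :&: V1| + a.
  by rewrite /a -(cardsID X V1) setDE setIC [V1 :&: ~: X]setIC.
have V2s : #|V2| = #|X :&: V2| + b.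
  by rewrite /b -(cardsID X V2) setDE setIC [V2 :&: ~: X]setIC.
have key : crosses X V1 -> a <= b.+1 /\ b <= a.+1.
  case=> /set0Pn [v vX1] /set0Pn [w wX2].
  move: vX1 wX2; rewrite !in_setI in_setC => /andP [vX v1] /andP [wX w2].
  have := Hdeg v; have := Hdeg w; rewrite !degg // ab.
  have := degh v vX; have := degh w wX; rewrite v1 (negbTE w2) -/a -/b.
  move=> hw hv Iw Iv.
  have Iw' : (a + b <= 2 * deg h w + 1)%N.
    lia.
  have Iv' : (a + b <= 2 * deg h v + 1)%N by lia.
  lia.
move: Hbal; rewrite -/V2 => Hbal.
have o1 : a = b.+1 -> odd (a + b) by move=> ->; rewrite addSn /= addnn odd_double.
have o2 : b = a.+1 -> odd (a + b) by move=> ->; rewrite addnS /= addnn odd_double.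
have o3 : a = b -> ~~ odd (a + b) by move=> ->; rewrite addnn odd_double.
rewrite ab; split=> cr par; have [k1 k2] := key cr.
  have ee : a = b by lia.
  split=> //; lia.
have ee : a = b.+1 \/ b = a.+1 by lia.
split; lia.
Qed.
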